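(* Let $0<\alpha\le\beta<\infty$ and $M,\tilde M>0$ with $M/(2^{4\beta+1}\tilde M)\ge1$, and let $\rho=[M/(2^{2\beta+1}\tilde M)]^{1/\beta}$. Let $\zeta\in(0,1]$, let $\mathbf{c}_0$ be such that $\{\mathbf{x}:\|\mathbf{x}-\mathbf{c}_0\|_\infty\le\rho\zeta^{\alpha/\beta}\}\subset[0,1]^d$, and let $\mathbf{c}$ satisfy $\|\mathbf{c}-\mathbf{c}_0\|_\infty\le\rho\zeta^{\alpha/\beta}-\zeta$. Define $y:[0,1]^d\to\mathbb{R}$ by $y(\mathbf{x})=\frac M2\zeta^\alpha-\frac M2\|\mathbf{x}-\mathbf{c}\|_\infty^\alpha$ if $\|\mathbf{x}-\mathbf{c}\|_\infty\le\zeta$; $y(\mathbf{x})=0$ if $\|\mathbf{x}-\mathbf{c}\|_\infty>\zeta$ and $\|\mathbf{x}-\mathbf{c}_0\|_\infty\le\rho\zeta^{\alpha/\beta}$; $y(\mathbf{x})=2^\beta\tilde M\rho^\beta\zeta^\alpha-2^\beta\tilde M\|\mathbf{x}-\mathbf{c}_0\|_\infty^\beta$ if $\|\mathbf{x}-\mathbf{c}\|_\infty>\zeta$ and $\|\mathbf{x}-\mathbf{c}_0\|_\infty>\rho\zeta^{\alpha/\beta}$. Then $y$ has unique maximizer $\mathbf{x}^*=\mathbf{c}$ on $[0,1]^d$ and $\tilde M\|\mathbf{x}^*-\mathbf{x}\|_\infty^\beta\le|y(\mathbf{x}^* )-y(\mathbf{x})|\le M\|\mathbf{x}^*-\mathbf{x}\|_\infty^\alpha$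 for all $\mathbf{x}\in[0,1]^d$.
   Context: $\|\mathbf{x}\|_\infty=\max_l|x_l|$. The condition $M/(2^{4\beta+1}\tilde M)\ge1$ is a standing requirement imposed by the paper on the constants in this construction. *)

(* Defs.v *)
From HB Require Import structures.
From mathcomp Require Import all_boot all_order all_algebra.
From mathcomp Require Import all_classical all_reals all_analysis.
Set Implicit Arguments. Unset Strict Implicit. Unset Printing Implicit Defensive.
Import Order.TTheory GRing.Theory Num.Theory.
Local Open Scope ring_scope.

(* sup-norm distance ||x - c||_oo = max_l |x_l - c_l| (0 when d = 0). *)
Definition supdist (R : realType) (d : nat) (x c : 'I_d -> R) : R :=
  \big[Num.max/0]_(i < d) `|x i - c i|.

Definition in_cube (R : realType) (d : nat) (x : 'I_d -> R) : Prop :=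
  forall i, 0 <= x i <= 1.

Definition yfun (R : realType) (d : nat) (alpha beta M Mt zeta rho : R)
  (c0 c : 'I_d -> R) (x : 'I_d -> R) : R :=
  if supdist x c <= zeta then
    M / 2 * zeta `^ alpha - M / 2 * supdist x c `^ alpha
  else if supdist x c0 <= rho * zeta `^ (alpha / beta) then 0
  else 2 `^ beta * Mt * rho `^ beta * zeta `^ alpha
       - 2 `^ beta * Mt * supdist x c0 `^ beta.

(* Main.v *)
Require Import Defs.
From HB Require Import structures.
From mathcomp Require Import all_boot all_order all_algebra.
From mathcomp Require Import all_classical all_reals all_analysis.
From mathcomp Require Import ring lra.
Import Order.TTheory GRing.Theory Num.Theory.
Local Open Scope ring_scope.

Section H.
Context {R : realType} {d : nat}.
Implicit Types x y z : 'I_d -> R.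

Lemma sd_ge0 x z : 0 <= supdist x z.
Proof.
rewrite /supdist; elim/big_ind: _ => //= u v hu hv.
by rewrite le_max hu.
Qed.

Lemma sd_le x z i : `|x i - z i| <= supdist x z.
Proof.
rewrite /supdist.
have : i \in index_enum 'I_d by rewrite mem_index_enum.
elim: (index_enum 'I_d) => [//|j s IH]; rewrite big_cons inE /=.
case/orP=> [/eqP ->|/IH h]; first by rewrite le_max lexx.
by rewrite le_max h orbT.
Qed.

Lemma sd_leP x z b : 0 <= b -> (forall i, `|x i - z i| <= b) -> supdist x z <= b.
Proof.
move=> b0 h; rewrite /supdist; elim/big_ind: _ => //= u v hu hv.
by rewrite ge_max hu hv.
Qed.

Lemma sd_sym x z : supdist x z = supdist z x.
Proof.
rewrite /supdist; apply: eq_bigr => i _; by rewrite distrC.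
Qed.

Lemma sd_tri x y z : supdist x z <= supdist x y + supdist y z.
Proof.
apply: sd_leP; first by rewrite addr_ge0 ?sd_ge0.
move=> i; apply: le_trans (ler_distD (y i) _ _) _.
by rewrite lerD ?sd_le.
Qed.

Lemma sd_eq0 x z : supdist x z <= 0 -> x = z.
Proof.
move=> h; apply: boolp.funext => i; apply/eqP; rewrite -subr_eq0 -normr_le0.
exact: le_trans (sd_le _ _ _) h.
Qed.

Lemma sd_cube x z : in_cube x -> in_cube z -> supdist x z <= 1.
Proof.
move=> hx hz; apply: sd_leP => // i.
move: (hx i) (hz i) => /andP[? ?] /andP[? ?].
rewrite ler_norml; apply/andP; split; lra.
Qed.

End H.
Lemma pw_le (R : realType) (r a b : R) : 0 <= r -> r <= 1 -> 0 < a -> a <= b ->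
  r `^ b <= r `^ a.
Proof.
move=> r0 r1 a0 ab; have b0 : 0 < b by apply: lt_le_trans ab.
case: (eqVneq r 0) => [->|rn0].
  by rewrite !powR0 ?gt_eqF.
apply: ger_powR => //; rewrite r1 andbT lt_neqAle r0 andbT eq_sym //.
Qed.

Lemma pw_mono (R : realType) (b u v : R) : 0 <= b -> 0 <= u -> u <= v -> u `^ b <= v `^ b.
Proof. by move=> b0 u0 uv; apply: ge0_ler_powR => //; rewrite nnegrE // (le_trans u0 uv). Qed.

Lemma pw2 (R : realType) (b : R) (n : nat) : 2 `^ (n%:R * b + 1) = (2 `^ b) ^+ n * 2.
Proof.
rewrite powRD; last by rewrite pnatr_eq0 implybT.
by rewrite (mulrC n%:R) powRrM powR_mulrn ?powR_ge0 // powRr1.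
Qed.

Theorem lemma4 (R : realType) (d : nat) (alpha beta M Mt zeta : R)
  (c0 c : 'I_d -> R) :
  0 < alpha -> alpha <= beta -> 0 < M -> 0 < Mt ->
  1 <= M / (2 `^ (4 * beta + 1) * Mt) ->
  0 < zeta -> zeta <= 1 ->
  let rho := (M / (2 `^ (2 * beta + 1) * Mt)) `^ beta^-1 in
  (forall x : 'I_d -> R,
     supdist x c0 <= rho * zeta `^ (alpha / beta) -> in_cube x) ->
  supdist c c0 <= rho * zeta `^ (alpha / beta) - zeta ->
  let y := yfun alpha beta M Mt zeta rho c0 c in
  [/\ in_cube c,
      (forall x, in_cube x -> y x <= y c),
      (forall x, in_cube x -> y x = y c -> x = c) &
      (forall x, in_cube x ->
         Mt * supdist c x `^ beta <= `|y c - y x| <= M * supdist c x `^ alpha)].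
Proof.
move=> ha hab hM hMt hcond hz hz1 rho hball hD y.
have hb : 0 < beta by apply: lt_le_trans hab.
set P := 2 `^ beta.
have hP1 : 1 <= P.
  by rewrite -(powRr0 2) /P; apply: ler_powR => //; [rewrite ler1n | exact: ltW].
have hP0 : 0 < P by exact: lt_le_trans ltr01 hP1.
rewrite (@pw2 _ beta 4) -/P in hcond.
have hP4 : P ^+ 4 * 2 * Mt <= M.
  by move: hcond; rewrite ler_pdivlMr ?mulr_gt0 ?exprn_gt0 // mul1r.
set K := rho `^ beta.
have hK : K = M / (P ^+ 2 * 2 * Mt).
  rewrite /K /rho -powRrM mulVf ?gt_eqF // powRr1; last first.
    by rewrite divr_ge0 ?ltW ?mulr_gt0 ?powR_gt0.
  by rewrite (@pw2 _ beta 2) -/P.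
have hPK : P * P * Mt * K * 2 = M.
  rewrite hK; field; rewrite ?gt_eqF ?mulr_gt0 ?exprn_gt0 //.
have hKp : 0 <= K by rewrite /K powR_ge0.
have hf1 : Mt * P * K <= M / 2.
  have h0 : 0 <= Mt * P * K by rewrite !mulr_ge0 // ltW.
  have h1 : 0 <= (Mt * P * K) * (P - 1) by rewrite mulr_ge0 // subr_ge0.
  nra.
have hP2 : 1 <= P * P by nra.
have hf3 : P * P * Mt <= M / 2.
  have h1 : 0 <= (P * P * Mt) * (P * P - 1) by rewrite mulr_ge0 ?subr_ge0 // !mulr_ge0 // ltW.
  move: hP4; rewrite (_ : P ^+ 4 = (P * P) * (P * P)); last by rewrite !exprS expr0 mulr1 !mulrA.
  nra.
have hf2 : Mt * 2 <= M.
  have h1 : 0 <= Mt * (P * P - 1) by rewrite mulr_ge0 ?subr_ge0 // ltW.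
  nra.
set a := zeta `^ alpha.
have ha0 : 0 < a by rewrite powR_gt0.
have hA : (zeta `^ (alpha / beta)) `^ beta = a.
  by rewrite -powRrM mulfVK // gt_eqF.
set R0 := rho * zeta `^ (alpha / beta).
have hR0 : 0 <= R0 by rewrite mulr_ge0 ?powR_ge0.
have hR0b : R0 `^ beta = K * a by rewrite powRM ?powR_ge0 // hA.
have h2pow u : 0 <= u -> (2 * u) `^ beta = P * u `^ beta.
  by move=> u0; rewrite powRM.
have hcc : supdist c c = 0.
  apply/eqP; rewrite eq_le sd_ge0 andbT; apply: sd_leP => // i.
  by rewrite subrr normr0.
have ycc : y c = M / 2 * a.
  by rewrite /y /yfun hcc (ltW hz) powR0 ?gt_eqF // mulr0 subr0.
have hcube : in_cube c by apply: hball; lra.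
have claim x : in_cube x ->
    0 <= Mt * supdist x c `^ beta <= y c - y x /\ y c - y x <= M * supdist x c `^ alpha.
  move=> hx.
  set r := supdist x c; set s := supdist x c0; set D := supdist c c0.
  have hD' : D <= R0 - zeta by [].
  have hDz : 0 <= D by apply: sd_ge0.
  have r0 : 0 <= r := sd_ge0 _ _.
  have s0 : 0 <= s := sd_ge0 _ _.
  have r1 : r <= 1 := sd_cube _ _ hx hcube.
  have hrs : r <= s + D by have := sd_tri x c0 c; rewrite (sd_sym c0 c).
  have hsr : s <= r + D := sd_tri x c c0.
  have hrb0 : 0 <= r `^ beta := powR_ge0 _ _.
  have hra : r `^ beta <= r `^ alpha := pw_le _ _ _ _ r0 r1 ha hab.
  have hMt0 : 0 <= Mt := ltW hMt.
  rewrite ycc /y /yfun -/r -/s -/R0 -/a -/P -/K.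
  have hMtrb : 0 <= Mt * r `^ beta by rewrite mulr_ge0.
  case: ifPn => hrz.
    have h1 : Mt * r `^ beta <= Mt * r `^ alpha by rewrite ler_wpM2l.
    have h2 : 0 <= (M/2 - Mt) * r `^ alpha by rewrite mulr_ge0 ?powR_ge0 //; lra.
    split; [apply/andP; split=> //; nra | nra].
  rewrite -ltNge in hrz.
  have hza : a <= r `^ alpha by apply: pw_mono; [exact: ltW | exact: ltW |exact: ltW].
  case: ifPn => hsR.
    have hr2 : r `^ beta <= P * (K * a).
      rewrite -hR0b -h2pow //; apply: pw_mono; [exact: ltW | by [] | lra].
    have h1 : Mt * r `^ beta <= Mt * (P * (K * a)) by rewrite ler_wpM2l.
    have h3 : (Mt * P * K) * a <= M / 2 * a by rewrite ler_wpM2r // ltW.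
    split; [apply/andP; split=> //; nra | nra].
  rewrite -ltNge in hsR.
  have hsb0 : 0 <= s `^ beta := powR_ge0 _ _.
  have hrs2 : r `^ beta <= P * s `^ beta.
    rewrite -h2pow //; apply: pw_mono; [exact: ltW | by [] | lra].
  have h3 : (Mt * P * K) * a <= M / 2 * a by rewrite ler_wpM2r // ltW.
  have h1 : Mt * r `^ beta <= Mt * (P * s `^ beta) by rewrite ler_wpM2l.
  split; first by apply/andP; split=> //; nra.
  have hPMtKa : 0 <= P * Mt * K * a by rewrite !mulr_ge0 // ltW.
  case: (lerP s (2 * R0)) => hs2.
    have hs2' : s `^ beta <= P * (K * a).
      rewrite -hR0b -h2pow //; apply: pw_mono; [exact: ltW | by [] | lra].
    have h4 : (P * Mt) * s `^ beta <= (P * Mt) * (P * (K * a)) by rewrite ler_wpM2l // mulr_ge0 // ltW.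
    have h5 : M * a <= M * r `^ alpha by rewrite ler_wpM2l // ltW.
    nra.
  have hsr2 : s `^ beta <= P * r `^ beta.
    rewrite -h2pow //; apply: pw_mono; [exact: ltW | by [] | lra].
  have h4 : (P * Mt) * s `^ beta <= (P * Mt) * (P * r `^ beta) by rewrite ler_wpM2l // mulr_ge0 // ltW.
  have h5 : (P * P * Mt) * r `^ beta <= M / 2 * r `^ beta by rewrite ler_wpM2r.
  have h6 : M / 2 * r `^ beta <= M / 2 * r `^ alpha by rewrite ler_wpM2l // divr_ge0 // ltW.
  have h7 : M / 2 * a <= M / 2 * r `^ alpha by rewrite ler_wpM2l // divr_ge0 // ltW.
  nra.
split=> //.
- by move=> x /claim [] /andP [h0 h] _; lra.
- move=> x /claim [] /andP [h0 h] _ e.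
  have hb0 : supdist x c `^ beta = 0.
    apply/eqP; rewrite eq_le powR_ge0 andbT.
    rewrite -(pmulr_rle0 _ hMt); lra.
  by apply: sd_eq0; rewrite (powR_eq0_eq0 hb0).
- move=> x /claim [] /andP [h0 h] h'.
  rewrite (sd_sym c x) ger0_norm; last lra.
  by rewrite h h'.


Qed.
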